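(* Let $n\ge 3$ be a multiple of $3$ and let $A\subseteq\mathbb{F}_3^n$ be such that the equation $a+b+c=0$ with $a,b,c\in A$ has no solutions except $a=b=c$. Then $$|A|\le 3\sum_{i=0}^{2n/3}\binom{n}{i}_2-\binom{n}{2n/3}_2 .$$
   Context: $\mathbb{F}_3$ is the field of integers modulo $3$. The trinomial coefficient $\binom{n}{k}_2$ is the coefficient of $x^k$ in $(1+x+x^2)^n$. *)

(* Defs.v *)
From HB Require Import structures.
From mathcomp Require Import all_boot all_order all_algebra.
Set Implicit Arguments. Unset Strict Implicit. Unset Printing Implicit Defensive.
Import GRing.Theory Num.Theory.
Local Open Scope ring_scope.

Definition trinom (n k : nat) : int := ((1 + 'X + 'X^2 : {poly int}) ^+ n)`_k.

(* Main.v *)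
Require Import Defs.
From HB Require Import structures.
From mathcomp Require Import all_boot all_order all_algebra.
From mathcomp Require Import zify ring.
Set Implicit Arguments. Unset Strict Implicit.
Import GRing.Theory Num.Theory.
Local Open Scope ring_scope.

Lemma allF3 (t : 'F_3) : t = 0 \/ t = 1 \/ t = -1.
Proof. by case: t => [[|[|[|//]]] ?]; [left|right;left|right;right]; apply/val_inj. Qed.

Lemma f3_sq (t : 'F_3) : 1 - t^+2 = (t == 0)%:R.
Proof. by case: (allF3 t) => [->|[->|->]]; apply/eqP. Qed.

Lemma f3_3 (t : 'F_3) : t + t + t = 0.
Proof. by case: (allF3 t) => [->|[->|->]]; apply/eqP. Qed.

Definition o0 : 'I_3 := @Ordinal 3 0 isT.
Definition o1 : 'I_3 := @Ordinal 3 1 isT.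
Definition o2 : 'I_3 := @Ordinal 3 2 isT.
Definition ep (t : 'I_7) : 'I_3 := nth o0 [:: o0; o2; o0; o0; o1; o0; o1] t.
Definition eq_ (t : 'I_7) : 'I_3 := nth o0 [:: o0; o0; o2; o0; o1; o1; o0] t.
Definition er (t : 'I_7) : 'I_3 := nth o0 [:: o0; o0; o0; o2; o0; o1; o1] t.
Definition ec (t : 'I_7) : 'F_3 := nth 0 [:: 1; -1; -1; -1; 1; 1; 1] t.

Lemma g_exp (a b c : 'F_3) : 1 - (a+b+c)^+2 = \sum_(t < 7) ec t * a ^+ ep t * b ^+ eq_ t * c ^+ er t.
Proof.
rewrite !big_ord_recr big_ord0 /=.
by case: (allF3 a) => [->|[->|->]]; case: (allF3 b) => [->|[->|->]]; case: (allF3 c) => [->|[->|->]]; apply/eqP.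
Qed.

Lemma e_wt (t : 'I_7) : (ep t + eq_ t + er t <= 2)%N.
Proof. by case: t => [[|[|[|[|[|[|[|//]]]]]]] ?]. Qed.

Definition weight n (a : {ffun 'I_n -> 'I_3}) : nat := (\sum_i (a i : nat))%N.
Definition mono n (a : {ffun 'I_n -> 'I_3}) (x : 'rV['F_3]_n) : 'F_3 := \prod_i x 0 i ^+ a i.
Definition pa n (f : {ffun 'I_n -> 'I_7}) : {ffun 'I_n -> 'I_3} := [ffun i => ep (f i)].
Definition pb n (f : {ffun 'I_n -> 'I_7}) : {ffun 'I_n -> 'I_3} := [ffun i => eq_ (f i)].
Definition pc n (f : {ffun 'I_n -> 'I_7}) : {ffun 'I_n -> 'I_3} := [ffun i => er (f i)].
Definition wt n (f : {ffun 'I_n -> 'I_7}) : 'F_3 := \prod_i ec (f i).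

Lemma weight_sum n (f : {ffun 'I_n -> 'I_7}) :
  (weight (pa f) + weight (pb f) + weight (pc f) <= 2 * n)%N.
Proof.
rewrite /weight -!big_split /= -[n in (2 * n)%N]card_ord mulnC -sum_nat_const.
by apply: leq_sum => i _; rewrite !ffunE e_wt.
Qed.

Lemma T_exp n (x y z : 'rV['F_3]_n) :
  ((x + y + z == 0)%:R : 'F_3) =
  \sum_(f : {ffun 'I_n -> 'I_7}) wt f * mono (pa f) x * mono (pb f) y * mono (pc f) z.
Proof.
have -> : ((x + y + z == 0)%:R : 'F_3) = \prod_i (1 - (x 0 i + y 0 i + z 0 i)^+2).
  under eq_bigr do rewrite f3_sq.
  case: eqP => [E|E].
    by rewrite big1 // => i _; move/matrixP: E => /(_ 0 i); rewrite !mxE => ->.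
  have [i Hi] : exists i, x 0 i + y 0 i + z 0 i != 0.
    apply/existsP; apply: contraT; rewrite negb_exists => /forallP H.
    exfalso; apply: E; apply/matrixP => a b; rewrite ord1 !mxE; exact/eqP/negbNE/H.
  by rewrite (bigD1 i) //= (negPf Hi) mul0r.
under eq_bigr do rewrite g_exp.
rewrite bigA_distr_bigA /=; apply: eq_bigr => f _.
by rewrite /wt /mono -!big_split /=; apply: eq_bigr => i _; rewrite !ffunE.
Qed.
Lemma rank_sum_outer (R : fieldType) m p (I : finType) (S : {set I})
  (u : I -> 'cV[R]_m) (w : I -> 'rV[R]_p) :
  (\rank (\sum_(i in S) u i *m w i)%R <= #|S|)%N.
Proof.
rewrite -sum1_card.
apply: (big_ind2 (fun M k => \rank M <= k)%N).
- by rewrite mxrank0.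
- move=> M1 k1 M2 k2 h1 h2; apply: leq_trans (mxrank_add _ _) _; exact: leq_add.
- move=> i _; apply: leq_trans (mxrankM_maxl _ _) _; exact: rank_leq_col.
Qed.

Lemma rank_mxsub (R : fieldType) m r (f : 'I_r -> 'I_m) (D : 'M[R]_m) :
  (\rank (mxsub f f D) <= \rank D)%N.
Proof.
rewrite -[D]mul1mx mxsub_mul; apply: leq_trans (mxrankM_maxr _ _) _.
rewrite -[D]mulmx1 -mulmx_colsub; apply: leq_trans (mxrankM_maxl _ _) _.
by rewrite mulmx1 mul1mx.
Qed.

Lemma supp_lemma (R : fieldType) m s (K : 'M[R]_(m,s)) :
  exists h : 'rV_s, (h <= K)%MS /\ (\rank K <= \rank (diag_mx h))%N.
Proof.
set B := row_base K.
have fT : row_full B^T by rewrite /row_full mxrank_tr; exact: row_base_free.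
set f := fullrankfun fT.
have U : (rowsub f B^T)^T \in unitmx by rewrite unitmx_tr fullrowsub_unit.
set h := (const_mx 1 : 'rV[R]_(\rank K)) *m invmx (rowsub f B^T)^T *m B.
have hf : forall a, h 0 (f a) = 1.
  move=> a.
  have : colsub f h = const_mx 1.
    rewrite /h -mulmx_colsub.
    have -> : colsub f B = (rowsub f B^T)^T by apply/matrixP => i j; rewrite !mxE.
    by rewrite -mulmxA mulVmx // mulmx1.
  by move/matrixP/(_ 0 a); rewrite !mxE.
exists h; split.
  apply: submx_trans (submxMl _ _) _.
  by rewrite (eq_row_base K).
apply: leq_trans (rank_mxsub f _).
have -> : mxsub f f (diag_mx h) = 1%:M.
  apply/matrixP => a b; rewrite mxE [diag_mx h _ _]mxE hf (inj_eq (@fullrankfun_inj _ _ _ _ fT)) mxE.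
  by case: (a == b).
by rewrite mxrank1.
Qed.
Lemma trinom_card n k : trinom n k = #|[set a : {ffun 'I_n -> 'I_3} | weight a == k]|%:R.
Proof.
rewrite /trinom.
have -> : (1 + 'X + 'X^2 : {poly int}) = \sum_(j < 3) 'X^j.
  by rewrite !big_ord_recr big_ord0 /= add0r expr0 expr1.
rewrite -[n in _ ^+ n]card_ord -prodr_const bigA_distr_bigA /=.
rewrite coef_sum.
under eq_bigr do rewrite prodrXr coefXn.
rewrite -sumr_const [RHS]big_mkcond; apply: eq_bigr => a _.
by rewrite inE /weight eq_sym; case: (_ == _).
Qed.

Lemma card_wt_le n M :
  (#|[set a : {ffun 'I_n -> 'I_3} | (weight a <= M)%N]|%:R : int) = \sum_(k < M.+1) trinom n k.
Proof.
under eq_bigr do rewrite trinom_card.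
rewrite -[LHS]sumr_const (partition_big (fun a => (inord (weight a) : 'I_M.+1)) predT) //=.
apply: eq_bigr => k _; rewrite -sumr_const; apply: eq_bigl => a; rewrite !inE.
case: (leqP (weight a) M) => H /=.
  by rewrite -(inj_eq val_inj) /= inordK.
by apply/esym/negbTE; rewrite neq_ltn; apply/orP; right; apply: leq_ltn_trans H; rewrite -ltnS.
Qed.

Lemma mul_delta_entry (R : pzRingType) p (c : 'M[R]_(1,1)) (j k : 'I_p) :
  (c *m delta_mx 0 j) 0 k = c 0 0 *+ (j == k).
Proof. by rewrite !mxE big_ord1 !mxE eqxx /= mulr_natr eq_sym. Qed.

Theorem mainTheorem6 (n : nat) (hn3 : (3 <= n)%N) (hdiv : (3 %| n)%N)
    (A : {set 'rV['F_3]_n})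
    (hA : forall a b c : 'rV['F_3]_n, a \in A -> b \in A -> c \in A ->
            a + b + c = 0 -> a = b /\ b = c) :
  (#|A|%:Z <= 3 * (\sum_(i < (2 * n %/ 3).+1) trinom n i) - trinom n (2 * n %/ 3))%R.
Proof.
set N := (2 * n %/ 3)%N.
case/dvdnP: hdiv => q hq.
have hN : N = (2 * q)%N by rewrite /N hq mulnA mulnK.
have h3N : (2 * n = 3 * N)%N by rewrite hN hq; lia.
have N0 : (0 < N)%N by rewrite hN; lia.
pose v := fun i : 'I_#|A| => (enum_val i : 'rV['F_3]_n).
have vA i : v i \in A := enum_valP i.
have vinj : injective v := @enum_val_inj _ _.
pose S1 := [set a : {ffun 'I_n -> 'I_3} | (weight a <= N)%N].
pose S3 := [set a : {ffun 'I_n -> 'I_3} | (weight a < N)%N].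
pose Cmat := (\sum_(g in S3) (\col_j mono g (v j)) *m delta_mx 0 (enum_rank g))%R.
have [h [hK hr]] := supp_lemma (kermx Cmat).
have hC : h *m Cmat = 0 by apply/eqP; rewrite -sub_kermx.
have hz g : (weight g < N)%N -> \sum_l mono g (v l) * h 0 l = 0.
  move=> Hg; have := congr1 (fun M : 'M_(1,_) => M 0 (enum_rank g)) hC; rewrite /= [X in _ = X]mxE.
  rewrite mulmx_sumr summxE (bigD1 g) ?inE //= big1 ?addr0.
    rewrite mulmxA mul_delta_entry eqxx mulr1n mxE => H; rewrite -[RHS]H.
    by apply: eq_bigr => l _; rewrite mxE mulrC.
  move=> g' /andP[_ ne]; rewrite mulmxA mul_delta_entry.
  by rewrite (inj_eq enum_rank_inj) (negPf ne) mulr0n.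
pose Zh := fun f : {ffun 'I_n -> 'I_7} => \sum_l mono (pc f) (v l) * h 0 l.
have key i j : diag_mx h i j =
    \sum_f wt f * mono (pa f) (v i) * mono (pb f) (v j) * Zh f.
  have E l : (v i + v j + v l == 0) = (i == j) && (j == l).
    apply/idP/idP.
      move/eqP => E; case: (hA _ _ _ (vA i) (vA j) (vA l) E) => /vinj -> /vinj ->.
      by rewrite !eqxx.
    case/andP => /eqP <- /eqP <-; apply/eqP/matrixP => a b; rewrite !mxE f3_3 //.
  under eq_bigr => f _ do rewrite /Zh mulr_sumr.
  under eq_bigr => f _ do under eq_bigr => l _ do rewrite mulrA.
  rewrite exchange_big /=.
  under eq_bigr => l _ do rewrite -mulr_suml -T_exp E.
  rewrite mxE; case: (eqVneq i j) => [<-|ne].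
    rewrite (bigD1 i) //= eqxx mul1r big1 ?addr0 ?mulr1n //.
    by move=> l nl; rewrite eq_sym (negPf nl) mul0r.
  by rewrite big1 ?mulr0n // => l _; rewrite mul0r.
have split i j : \sum_f wt f * mono (pa f) (v i) * mono (pb f) (v j) * Zh f =
   \sum_(f | (weight (pa f) <= N)%N) wt f * mono (pa f) (v i) * mono (pb f) (v j) * Zh f
 + \sum_(f | (N < weight (pa f))%N && (weight (pb f) <= N)%N)
       wt f * mono (pa f) (v i) * mono (pb f) (v j) * Zh f.
  rewrite (bigID (fun f => (weight (pa f) <= N)%N)) /=; congr (_ + _).
  rewrite (bigID (fun f => (weight (pb f) <= N)%N)) /= [X in _ + X]big1 ?addr0.
    by apply: eq_bigl => f; rewrite ltnNge.
  move=> f /andP[H1 H2]; rewrite /Zh hz ?mulr0 //.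
  have := weight_sum f; rewrite -ltnNge in H1; rewrite -ltnNge in H2; lia.
pose M1 := (\sum_(a in S1) (\col_i mono a (v i)) *m
   (\row_j \sum_(f | pa f == a) wt f * mono (pb f) (v j) * Zh f))%R.
pose M2 := (\sum_(b in S1) (\col_i \sum_(f | (N < weight (pa f))%N && (pb f == b))
     wt f * mono (pa f) (v i) * Zh f) *m (\row_j mono b (v j)))%R.
have DM : diag_mx h = M1 + M2.
  apply/matrixP => i j; rewrite key split [RHS]mxE; congr (_ + _).
    rewrite /M1 summxE (partition_big (@pa n) (mem S1)) /=; last by move=> f; rewrite inE.
    apply: eq_bigr => a Ha; rewrite mxE big_ord1 !mxE mulr_sumr.
    apply: eq_big => f.
      case E: (pa f == a); rewrite ?andbF ?andbT //; move: Ha; rewrite (eqP E) inE => -> //.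
    by case/andP => _ /eqP <-; rewrite !mulrA [mono _ _ * wt _]mulrC.
  rewrite /M2 summxE (partition_big (@pb n) (mem S1)) /=; last by move=> f /andP[_]; rewrite inE.
  apply: eq_bigr => b Hb; rewrite mxE big_ord1 !mxE mulr_suml.
  apply: eq_big => f.
    case E: (pb f == b); rewrite ?andbF ?andbT //; move: Hb; rewrite (eqP E) inE => ->; rewrite ?andbT //.
  by case/andP => _ /eqP <-; rewrite -!mulrA [Zh f * _]mulrC.
have r1 : (\rank M1 <= #|S1|)%N by exact: rank_sum_outer.
have r2 : (\rank M2 <= #|S1|)%N by exact: rank_sum_outer.
have rC : (\rank Cmat <= #|S3|)%N by exact: rank_sum_outer.
have rk : (#|A| <= #|S1| + #|S1| + #|S3|)%N.
  have := leq_trans hr (eq_leq (congr1 _ DM)).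
  move/leq_trans/(_ (mxrank_add M1 M2)); rewrite mxrank_ker; lia.
have eS3 : S3 = [set a | (weight a <= N.-1)%N].
  by apply/setP => a; rewrite !inE -[N in (_ < N)%N](prednK N0) ltnS.
have c1 := card_wt_le n N; have c3 := card_wt_le n N.-1.
rewrite prednK // -eS3 in c3.
rewrite big_ord_recr /=; move: c1; rewrite big_ord_recr /= => c1.
rewrite !natz -/S1 in c1 c3.
rewrite -c3 in c1 *.
have rkz : (#|A|%:Z <= #|S1|%:Z + #|S1|%:Z + #|S3|%:Z) by rewrite -!PoszD lez_nat.
apply: Order.le_trans rkz _; rewrite c1.
have -> : forall x t : int, 3 * (x + t) - t = (x + t) + (x + t) + x by move=> x t; ring.
exact: Order.le_refl.
Qed.
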